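(* Let $n,m,p,N\in\mathbb{N}_+$, $B\in\mathbb{R}^{n\times m}$, $C\in\mathbb{R}^{p\times n}$ of full column rank, $x_0\in\mathbb{R}^n$, $r_1,\dots,r_N\in\mathbb{R}^p$, $r_0:=Cx_0$, $A^{\rm r}\in\mathbb{R}^{n\times n}$, $u^{\rm r}_0,\dots,u^{\rm r}_{N-1}\in\mathbb{R}^m$, $\omega,\omega_0,\dots,\omega_{N-1}\ge0$, and $\mathcal{S}_{\rm M2}\subseteq\mathbb{R}^{n\times n}\times\mathbb{R}^{m\times N}$. Problem (MOPUL2) is: minimize $\|A-A^{\rm r}\|_F$ over $A\in\mathbb{R}^{n\times n}$, $U=(u_0,\dots,u_{N-1})\in\mathbb{R}^{m\times N}$ subject to $x_t=Ax_{t-1}+Bu_{t-1}$ ($t=1,\dots,N$), $y_t=Cx_t$ ($t=0,\dots,N$), $\sum_{t=1}^N\|y_t-r_t\|_2\le\omega$, $\|u_t-u^{\rm r}_t\|_2\le\omega_t$ ($t=0,\dots,N-1$), and $(A,U)\in\mathcal{S}_{\rm M2}$. Let $\beta>0$, $\tilde\omega:=\omega/\big(\sum_{i=0}^{N-1}\beta^i\big)$, and let problem (AMOPUL2) be: minimize $\|A-A^{\rm r}\|_F$ over $(A,U)$ subject to $\sum_{t=1}^N\|CAC^{\dagger}r_{t-1}+CBu_{t-1}-r_t\|_2\le\tilde\omega$, $\|u_t-u^{\rm r}_t\|_2\le\omega_t$ ($t=0,\dots,N-1$), and $(A,U)\in\mathcal{S}_{\rm M2}$. If $\|CA^{\rm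 a}C^{\dagger}\|_2\le\beta$ for every feasible $A^{\rm a}$ of (AMOPUL2), then every feasible solution of (AMOPUL2) is feasible for (MOPUL2), and the optimal objective value of (AMOPUL2) is an upper bound for the optimal objective value of (MOPUL2).
   Context: $C^{\dagger}$ is the Moore–Penrose inverse of $C$; $\|\cdot\|_F$ is the Frobenius norm; $\|\cdot\|_2$ is the Euclidean norm for vectors and the spectral norm for matrices. In the paper $\mathcal{S}_{\rm M2}$ is assumed SD representable, though this is not used in the claim. *)

(* Defs.v *)
From HB Require Import structures.
From mathcomp Require Import all_boot all_order all_algebra.
From mathcomp Require Import all_classical reals ereal.
Set Implicit Arguments. Unset Strict Implicit. Unset Printing Implicit Defensive.
Import Order.TTheory GRing.Theory Num.Theory.
Local Open Scope ring_scope.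

Section Defs.
Variable R : realType.

Definition norm2 (k : nat) (v : 'cV[R]_k) : R :=
  Num.sqrt (\sum_(i < k) v i 0 ^+ 2).

Definition frob (a b : nat) (M : 'M[R]_(a, b)) : R :=
  Num.sqrt (\sum_(i < a) \sum_(j < b) M i j ^+ 2).

Definition specnorm (a b : nat) (M : 'M[R]_(a, b)) : R :=
  sup [set norm2 (M *m x) | x in [set x : 'cV[R]_b | norm2 x <= 1]].

Definition is_MP_inverse (a b : nat) (C : 'M[R]_(a, b)) (X : 'M[R]_(b, a)) : Prop :=
  [/\ C *m X *m C = C, X *m C *m X = X,
      (C *m X)^T = C *m X & (X *m C)^T = X *m C].

(* the t-th column u_t of U = (u_0, ..., u_{N-1}); 0 if t >= N (never used) *)
Definition ucol (m N : nat) (U : 'M[R]_(m, N)) (t : nat) : 'cV[R]_m :=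
  oapp (fun j : 'I_N => col j U) 0 (insub t).

Fixpoint traj (n m N : nat) (A : 'M[R]_n) (B : 'M[R]_(n, m)) (U : 'M[R]_(m, N))
    (x0 : 'cV[R]_n) (t : nat) : 'cV[R]_n :=
  match t with
  | 0 => x0
  | t'.+1 => A *m traj A B U x0 t' + B *m ucol U t'
  end.

Definition refout (n p : nat) (C : 'M[R]_(p, n)) (x0 : 'cV[R]_n)
    (r : nat -> 'cV[R]_p) (t : nat) : 'cV[R]_p :=
  if t == 0%N then C *m x0 else r t.

Definition feas_MOPUL2 (n m p N : nat) (B : 'M[R]_(n, m)) (C : 'M[R]_(p, n))
    (x0 : 'cV[R]_n) (r : nat -> 'cV[R]_p) (ur : nat -> 'cV[R]_m)
    (om : R) (omt : nat -> R) (S : set ('M[R]_n * 'M[R]_(m, N)))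
    (A : 'M[R]_n) (U : 'M[R]_(m, N)) : Prop :=
  [/\ \sum_(t < N) norm2 (C *m traj A B U x0 t.+1 - r t.+1) <= om,
      (forall t : 'I_N, norm2 (col t U - ur t) <= omt t)
    & S (A, U)].

Definition feas_AMOPUL2 (n m p N : nat) (B : 'M[R]_(n, m)) (C : 'M[R]_(p, n))
    (Cd : 'M[R]_(n, p)) (x0 : 'cV[R]_n) (r : nat -> 'cV[R]_p)
    (ur : nat -> 'cV[R]_m) (omtil : R) (omt : nat -> R)
    (S : set ('M[R]_n * 'M[R]_(m, N)))
    (A : 'M[R]_n) (U : 'M[R]_(m, N)) : Prop :=
  [/\ \sum_(t < N) norm2 (C *m A *m Cd *m refout C x0 r t
                          + C *m B *m ucol U t - r t.+1) <= omtil,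
      (forall t : 'I_N, norm2 (col t U - ur t) <= omt t)
    & S (A, U)].

End Defs.

(* Main.v *)
Require Import Defs.
From HB Require Import structures.
From mathcomp Require Import all_boot all_order all_algebra.
From mathcomp Require Import all_classical reals ereal.
From mathcomp Require Import ring lra.
Import Order.TTheory GRing.Theory Num.Theory.
Local Open Scope ring_scope.
Local Open Scope classical_set_scope.

Set Implicit Arguments. Unset Strict Implicit.
Section H.
Variable R : realType.

Lemma sumsq_ge0 k (v : 'cV[R]_k) : 0 <= \sum_(i < k) v i 0 ^+ 2.
Proof. by apply: sumr_ge0 => i _; apply: sqr_ge0. Qed.

Lemma norm2_ge0 k (v : 'cV[R]_k) : 0 <= norm2 v.
Proof. exact: sqrtr_ge0. Qed.

Lemma norm2_sq k (v : 'cV[R]_k) : norm2 v ^+ 2 = \sum_(i < k) v i 0 ^+ 2.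
Proof. by rewrite /norm2 sqr_sqrtr // sumsq_ge0. Qed.

Lemma norm2_eq0 k (v : 'cV[R]_k) : norm2 v = 0 -> v = 0.
Proof.
move=> h0; have hs : \sum_(i < k) v i 0 ^+ 2 = 0 by rewrite -norm2_sq h0 expr0n.
apply/matrixP => i j; rewrite (ord1 j) mxE.
have := psumr_eq0P (P := predT) (fun i _ => sqr_ge0 (v i 0)) hs (i:=i) isT.
by move/eqP; rewrite sqrf_eq0 => /eqP.
Qed.

Lemma norm2_0 k : norm2 (0 : 'cV[R]_k) = 0.
Proof.
rewrite /norm2 big1 ?sqrtr0 // => i _; by rewrite mxE expr0n.
Qed.

Lemma norm2_coord k (v : 'cV[R]_k) j : `|v j 0| <= norm2 v.
Proof.
rewrite -sqrtr_sqr /norm2 ler_sqrt ?sumsq_ge0 //.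
rewrite (bigD1 j) //= lerDl; apply: sumr_ge0 => i _; exact: sqr_ge0.
Qed.

Lemma norm2Z k (c : R) (v : 'cV[R]_k) : norm2 (c *: v) = `|c| * norm2 v.
Proof.
rewrite /norm2 -sqrtr_sqr -sqrtrM ?sqr_ge0 // mulr_sumr.
by congr Num.sqrt; apply: eq_bigr => i _; rewrite mxE exprMn.
Qed.

Lemma CS k (u v : 'cV[R]_k) :
  \sum_(i < k) u i 0 * v i 0 <= norm2 u * norm2 v.
Proof.
set a := norm2 u; set b := norm2 v; set d := \sum_(i < k) _.
have ha : 0 <= a by exact: norm2_ge0.
have hb : 0 <= b by exact: norm2_ge0.
have key : 0 <= b ^+ 2 * a ^+ 2 + a ^+ 2 * b ^+ 2 - 2 * (a * b) * d.
  have -> : b ^+ 2 * a ^+ 2 + a ^+ 2 * b ^+ 2 - 2 * (a * b) * d =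
     \sum_(i < k) (b * u i 0 - a * v i 0) ^+ 2.
    have e1 : \sum_(i < k) (b * u i 0 - a * v i 0) ^+ 2 =
      b ^+ 2 * \sum_(i < k) u i 0 ^+ 2 + a ^+ 2 * \sum_(i < k) v i 0 ^+ 2
      - 2 * (a * b) * d.
      rewrite /d !mulr_sumr -big_split -sumrB /=.
      by apply: eq_bigr => i _; ring.
    by rewrite e1 -!norm2_sq.
  by apply: sumr_ge0 => i _; apply: sqr_ge0.
have [hab|hab] := boolP (0 < a * b).
  nra.
have : a * b = 0.
  by apply/eqP; rewrite eq_le leNgt hab /= mulr_ge0.
move/eqP; rewrite mulf_eq0 => /orP [] /eqP h0.
  have hu : u = 0 by exact: norm2_eq0.
  rewrite /d hu big1 ?mulr_ge0 // => i _; by rewrite mxE mul0r.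
have hv : v = 0 by exact: norm2_eq0.
rewrite /d hv big1 ?mulr_ge0 // => i _; by rewrite mxE mulr0.
Qed.

Lemma norm2D k (u v : 'cV[R]_k) : norm2 (u + v) <= norm2 u + norm2 v.
Proof.
have ha := norm2_ge0 u; have hb := norm2_ge0 v.
have -> : norm2 u + norm2 v = Num.sqrt ((norm2 u + norm2 v) ^+ 2).
  by rewrite sqrtr_sqr ger0_norm // addr_ge0.
rewrite /norm2 ler_sqrt ?sqr_ge0 //.
have hcs := CS u v.
have -> : \sum_(i < k) (u + v) i 0 ^+ 2 =
   norm2 u ^+ 2 + norm2 v ^+ 2 + 2 * \sum_(i < k) u i 0 * v i 0.
  rewrite !norm2_sq mulr_sumr -!big_split /=.
  by apply: eq_bigr => i _; rewrite mxE; ring.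
rewrite -/(norm2 u) -/(norm2 v); nra.
Qed.

Lemma norm2B k (u v : 'cV[R]_k) : norm2 (u - v) <= norm2 u + norm2 v.
Proof.
apply: (le_trans (norm2D _ _)).
by rewrite -scaleN1r norm2Z normrN normr1 mul1r.
Qed.

Lemma norm2_sum k (I : finType) (F : I -> 'cV[R]_k) :
  norm2 (\sum_(i : I) F i) <= \sum_(i : I) norm2 (F i).
Proof.
apply: (big_ind2 (fun x y => norm2 x <= y)).
- by rewrite norm2_0.
- move=> x1 y1 x2 y2 h1 h2; apply: (le_trans (norm2D _ _)); exact: lerD.
- by [].
Qed.

Lemma norm2_bound a b (M : 'M[R]_(a, b)) (x : 'cV[R]_b) :
  norm2 x <= 1 -> norm2 (M *m x) <= \sum_(j < b) norm2 (col j M).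
Proof.
move=> hx.
have -> : M *m x = \sum_(j < b) x j 0 *: col j M.
  apply/matrixP => i k; rewrite (ord1 k) !mxE summxE; apply: eq_bigr => j _.
  by rewrite !mxE mulrC.
apply: (le_trans (norm2_sum _)); apply: ler_sum => j _.
rewrite norm2Z -[X in _ <= X]mul1r; apply: ler_wpM2r; first exact: norm2_ge0.
exact: le_trans (norm2_coord _ _) hx.
Qed.

Lemma specnorm_le a b (M : 'M[R]_(a, b)) (x : 'cV[R]_b) c :
  specnorm M <= c -> norm2 (M *m x) <= c * norm2 x.
Proof.
move=> hs.
have hsup : forall y, norm2 y <= 1 -> norm2 (M *m y) <= c.
  move=> y hy; apply: le_trans hs; apply: sup_upper_bound; last by exists y.
  split; first by exists (norm2 (M *m 0)); exists 0 => //=; rewrite /norm2 big1 ?sqrtr0 ?ler01 // => i _; rewrite mxE expr0n.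
  exists (\sum_(j < b) norm2 (col j M)) => z [w hw <-]; exact: norm2_bound.
have [h0|h0] := eqVneq (norm2 x) 0.
  rewrite h0 mulr0 (norm2_eq0 h0) mulmx0 /norm2 big1 ?sqrtr0 // => i _; by rewrite mxE expr0n.
have hpos : 0 < norm2 x by rewrite lt0r h0 norm2_ge0.
have hy : norm2 ((norm2 x)^-1 *: x) = 1.
  by rewrite norm2Z ger0_norm ?invr_ge0 ?norm2_ge0 // mulVf.
have hy1 : norm2 ((norm2 x)^-1 *: x) <= 1 by rewrite hy.
have := hsup _ hy1; rewrite -scalemxAr norm2Z ger0_norm ?invr_ge0 ?norm2_ge0 //.
move=> h; rewrite mulrC -ler_pdivrMl //; by rewrite mulrC.
Qed.

Lemma rec_sum (a e : nat -> R) (b : R) : 0 <= b -> a 0%N = 0 ->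
  (forall t, 0 <= e t) -> (forall t, a t.+1 <= b * a t + e t) ->
  forall N, \sum_(t < N) a t.+1 <= (\sum_(i < N) b ^+ i) * \sum_(t < N) e t.
Proof.
move=> hb ha0 he hrec; elim => [|N IH]; first by rewrite !big_ord0 mulr0.
have hG : 0 <= \sum_(i < N) b ^+ i by apply: sumr_ge0 => i _; apply: exprn_ge0.
have hE : \sum_(t < N) e t <= \sum_(t < N.+1) e t.
  by rewrite big_ord_recr /= lerDl.
have h1 : \sum_(t < N.+1) a t.+1 <= b * \sum_(t < N) a t.+1 + \sum_(t < N.+1) e t.
  apply: le_trans; first by apply: ler_sum => t _; exact: hrec.
  rewrite big_split /= -mulr_sumr big_ord_recl ha0 add0r.
  by [].
apply: (le_trans h1).
rewrite [X in _ <= X * _]big_ord_recl expr0 mulrDl mul1r.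
have -> : \sum_(i < N) b ^+ (bump 0 i) = b * \sum_(i < N) b ^+ i.
  by rewrite mulr_sumr; apply: eq_bigr => i _; rewrite exprS.
rewrite addrC lerD2l -mulrA ler_wpM2l //.
apply: (le_trans IH); apply: ler_wpM2l => //.
Qed.

End H.
Unset Implicit Arguments. Set Strict Implicit.

Theorem theorem7 (R : realType) (n m p N : nat)
  (hn : (0 < n)%N) (hm : (0 < m)%N) (hp : (0 < p)%N) (hN : (0 < N)%N)
  (B : 'M[R]_(n, m)) (C : 'M[R]_(p, n)) (hC : \rank C = n)
  (Cd : 'M[R]_(n, p)) (hCd : is_MP_inverse C Cd)
  (x0 : 'cV[R]_n) (r : nat -> 'cV[R]_p) (Ar : 'M[R]_n) (ur : nat -> 'cV[R]_m)
  (om : R) (omt : nat -> R) (hom : 0 <= om)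
  (homt : forall t : nat, (t < N)%N -> 0 <= omt t)
  (SM2 : set ('M[R]_n * 'M[R]_(m, N))) (beta : R) (hbeta : 0 < beta) :
  let omtil := om / (\sum_(i < N) beta ^+ i) in
  (forall (Aa : 'M[R]_n) (U : 'M[R]_(m, N)),
      feas_AMOPUL2 B C Cd x0 r ur omtil omt SM2 Aa U ->
      specnorm (C *m Aa *m Cd) <= beta) ->
  (forall (A : 'M[R]_n) (U : 'M[R]_(m, N)),
      feas_AMOPUL2 B C Cd x0 r ur omtil omt SM2 A U ->
      feas_MOPUL2 B C x0 r ur om omt SM2 A U) /\
  (ereal_inf [set (frob (AU.1 - Ar))%:E | AU in
       [set AU : 'M[R]_n * 'M[R]_(m, N) |
          feas_MOPUL2 B C x0 r ur om omt SM2 AU.1 AU.2]]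
   <= ereal_inf [set (frob (AU.1 - Ar))%:E | AU in
       [set AU : 'M[R]_n * 'M[R]_(m, N) |
          feas_AMOPUL2 B C Cd x0 r ur omtil omt SM2 AU.1 AU.2]])%E.
Proof.
move=> omtil hspec.
have hCdC : Cd *m C = 1%:M.
  have /row_fullP [D hD] : row_full C by rewrite /row_full hC.
  case: hCd => hCCC _ _ _.
  by rewrite -(mul1mx (Cd *m C)) -hD -mulmxA (mulmxA C) hCCC.
have hG : 0 < \sum_(i < N) beta ^+ i.
  case: N hN {hspec omtil homt SM2} => // N' _.
  rewrite big_ord_recl expr0 ltr_pwDl //.
  by apply: sumr_ge0 => i _; apply: exprn_ge0; apply: ltW.
have feas : forall (A : 'M[R]_n) (U : 'M[R]_(m, N)),
      feas_AMOPUL2 B C Cd x0 r ur omtil omt SM2 A U ->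
      feas_MOPUL2 B C x0 r ur om omt SM2 A U.
  move=> A U hf; have hsp := hspec A U hf.
  case: hf => hsum hu hS; split => //.
  set M := C *m A *m Cd.
  pose d t := C *m traj A B U x0 t - refout C x0 r t.
  pose e t := M *m refout C x0 r t + C *m B *m ucol U t - r t.+1.
  have hd : forall t, d t.+1 = M *m d t + e t.
    move=> t; rewrite /d /e /= /refout /=.
    rewrite mulmxDr !mulmxA mulmxBr.
    have -> : C *m A *m traj A B U x0 t = M *m (C *m traj A B U x0 t).
      by rewrite /M -!mulmxA (mulmxA Cd) hCdC mul1mx.
    by rewrite !mulmxA !addrA subrK.
  have := @rec_sum R (fun t => norm2 (d t)) (fun t => norm2 (e t)) beta (ltW hbeta).
  move=> /(_ _ _ _ N) h.
  have h' : \sum_(t < N) norm2 (d t.+1) <=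
       (\sum_(i < N) beta ^+ i) * \sum_(t < N) norm2 (e t).
    apply: h.
    - by rewrite /d /refout /= subrr /norm2 big1 ?sqrtr0 // => i _; rewrite mxE expr0n.
    - by move=> t; apply: norm2_ge0.
    - move=> t; rewrite hd; apply: (le_trans (norm2D _ _)); rewrite lerD2r.
      exact: specnorm_le.
  have -> : \sum_(t < N) norm2 (C *m traj A B U x0 t.+1 - r t.+1) =
            \sum_(t < N) norm2 (d t.+1) by [].
  apply: (le_trans h').
  have -> : om = (\sum_(i < N) beta ^+ i) * omtil.
    by rewrite /omtil mulrC divfK // gt_eqF.
  rewrite ler_wpM2l //; exact: ltW.
split => //.
apply: le_ereal_inf_tmp => z [AU hAU <-].
apply: ereal_inf_lbound; exists AU => //; exact: feas.
Qed.
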